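(* Let $n\ge 5$ and let $\sigma$ be a maximal simplex of $\Delta_n$ that covers all places. If there exists $w\in\sigma$ with $N(w)\cap\sigma=\{v\}$, then $N(v)\subseteq\sigma$.
   Context: $\mathbb{I}_n$ is the $n$-dimensional hypercube graph on vertex set $\{0,1\}^n$ (adjacent iff differing in exactly one coordinate), with Hamming distance $d(v,w)=\#\{i: v(i)\ne w(i)\}$, $v(i)$ the $i$-th coordinate. $\Delta_n=\mathcal{VR}(\mathbb{I}_n;3)$ is the simplicial complex whose simplices are the subsets $\sigma\subseteq\{0,1\}^n$ with $d(x,y)\le 3$ for all $x,y\in\sigma$. A simplex $\sigma$ covers all places if for each $i\in[n]=\{1,\dots,n\}$ there are $v,w\in\sigma$ with $v(i)=1$ and $w(i)=0$. $N(v)=\{v^i: i\in[n]\}$, where $v^i$ is $v$ with coordinate $i$ changed. *)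

(* Defs.v *)
From mathcomp Require Import all_boot.
Set Implicit Arguments. Unset Strict Implicit. Unset Printing Implicit Defensive.

Definition vert (n : nat) := {ffun 'I_n -> bool}.

Definition hdist n (v w : vert n) : nat := #|[set i : 'I_n | v i != w i]|.

Definition flip n (v : vert n) (i : 'I_n) : vert n :=
  [ffun j => if j == i then ~~ v j else v j].

Definition nbhd n (v : vert n) : {set vert n} := [set flip v i | i : 'I_n].

(* simplices of Delta_n = VR(I_n; 3): nonempty sets with pairwise distance <= 3 *)
Definition is_simplex n (s : {set vert n}) : bool :=
  (s != set0) && [forall x in s, forall y in s, hdist x y <= 3].

Definition maximal_simplex n (s : {set vert n}) : bool :=
  is_simplex s && [forall t : {set vert n}, (s \proper t) ==> ~~ is_simplex t].

Definition covers_all_places n (s : {set vert n}) : bool :=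
  [forall i : 'I_n, [exists v in s, v i] && [exists w in s, ~~ w i]].

(* Main.v *)
Require Import Defs.
From mathcomp Require Import all_boot zify.
Set Implicit Arguments. Unset Strict Implicit.
Set Implicit Arguments. Unset Strict Implicit.

Definition D n (w u : vert n) : {set 'I_n} := [set i | u i != w i].
Definition mk n (w : vert n) (A : {set 'I_n}) : vert n := [ffun i => (i \in A) (+) w i].

Lemma D_mk n (w : vert n) A : D w (mk w A) = A.
Proof. apply/setP=> i; rewrite /D /mk !inE ffunE; by case: (i \in A); case: (w i). Qed.

Lemma mk_D n (w u : vert n) : mk w (D w u) = u.
Proof. apply/ffunP=> i; rewrite /D /mk ffunE inE; by case: (u i); case: (w i). Qed.

Lemma hdE n (w x y : vert n) :
  hdist x y + 2 * #|D w x :&: D w y| = #|D w x| + #|D w y|.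
Proof.
have -> : hdist x y = #|(D w x :|: D w y) :\: (D w x :&: D w y)|.
  rewrite /hdist; apply: eq_card => i; rewrite !inE.
  by case: (x i); case: (y i); case: (w i).
rewrite cardsDS; last by apply/subsetP=> i; rewrite !inE => /andP[-> _].
have := cardsUI (D w x) (D w y).
have : #|D w x :&: D w y| <= #|D w x :|: D w y|.
  by apply: subset_leq_card; apply/subsetP=> i; rewrite !inE => /andP[-> _].
lia.
Qed.

Lemma hdistC n (x y : vert n) : hdist x y = hdist y x.
Proof. by apply: eq_card => i; rewrite !inE eq_sym. Qed.

Lemma cardI_seq n (U : {set 'I_n}) (s : seq 'I_n) :
  uniq s -> #|U :&: [set x in s]| = count (mem U) s.
Proof.
move=> us.
have -> : U :&: [set x in s] = [set x in filter (mem U) s].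
  by apply/setP=> x; rewrite in_setI !in_set mem_filter andbC.
by rewrite cardsE; move/card_uniqP: (filter_uniq (mem U) us) ->; rewrite size_filter.
Qed.

Lemma card_seq n (s : seq 'I_n) : uniq s -> #|[set x in s]| = size s.
Proof. by move=> us; rewrite cardsE; apply/card_uniqP. Qed.

Lemma count_le n (U : {set 'I_n}) (s : seq 'I_n) : uniq s -> count (mem U) s <= #|U|.
Proof. move=> us; rewrite -cardI_seq //; apply: subset_leq_card; exact: subsetIl. Qed.

Lemma flipE n (w : vert n) a : flip w a = mk w [set x in [:: a]].
Proof. apply/ffunP=> i; rewrite /flip /mk !ffunE !inE; by case: (i == a); case: (w i). Qed.

Lemma flip2E n (w : vert n) a j : j != a -> flip (flip w a) j = mk w [set x in [:: a; j]].
Proof.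
move=> ja; apply/ffunP=> i; rewrite /flip /mk !ffunE !inE.
case: (eqVneq i j) => [->|_]; first by rewrite (negbTE ja) orbT; case: (w j).
by case: (i == a); case: (w i).
Qed.

Lemma flipflip n (w : vert n) a : flip (flip w a) a = w.
Proof. apply/ffunP=> i; rewrite /flip !ffunE; case: (i == a) => //; exact: negbK. Qed.

Lemma simp n (s : {set vert n}) : maximal_simplex s ->
  forall x y, x \in s -> y \in s -> hdist x y <= 3.
Proof.
case/andP=> /andP[_ /forallP H] _ x y xs ys.
by move: (H x) => /implyP /(_ xs) /forallP /(_ y) /implyP /(_ ys).
Qed.

Lemma maxl n (s : {set vert n}) : maximal_simplex s ->
  forall u, u \notin s -> exists2 x, x \in s & 3 < hdist x u.
Proof.
move=> hm u us; have hs := simp hm.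
case/andP: hm => _ /forallP /(_ (u |: s)) /implyP H.
have : s \proper u |: s.
  apply/properP; split; first exact: subsetUr.
  by exists u; rewrite ?inE ?eqxx.
move/H; rewrite /is_simplex negb_and => /orP[/negP []|].
  by apply/set0Pn; exists u; rewrite !inE eqxx.
move/forallPn => [x]; rewrite negb_imply => /andP[xin /forallPn [y]].
rewrite negb_imply => /andP[yin]; rewrite -ltnNge => hxy.
move: xin yin; rewrite !in_setU1 => /orP[/eqP E|xs] /orP[/eqP F|ys].
- move: hxy; rewrite E F /hdist (_ : [set i | u i != u i] = set0) ?cards0 //.
  by apply/setP=> i; rewrite !inE eqxx.
- by exists y => //; rewrite hdistC -E.
- by exists x => //; rewrite -F.
- by have := hs _ _ xs ys; lia.
Qed.

Ltac splitand := repeat match goal with |- is_true (_ && _) => apply/andP; split end.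
Ltac uq := rewrite /= ?inE ?negb_or; splitand; rewrite // eq_sym //.

Theorem mainTheorem7 (n : nat) (s : {set vert n}) (v : vert n) :
  5 <= n ->
  maximal_simplex s ->
  covers_all_places s ->
  (exists2 w, w \in s & nbhd w :&: s = [set v]) ->
  nbhd v \subset s.
Proof.
move=> hn hm hc [w ws hN].
have hs := simp hm; have hx := maxl hm.
have : v \in nbhd w :&: s by rewrite hN set11.
rewrite inE => /andP[/imsetP[i1 _ vE] vs].
have noflip : forall k, k != i1 -> flip w k \notin s.
  move=> k kn; apply/negP => fs.
  have : flip w k \in nbhd w :&: s by rewrite inE fs andbT; apply/imsetP; exists k.
  rewrite hN inE vE => /eqP /(congr1 (D w)); rewrite !flipE !D_mk => /setP /(_ k).
  by rewrite !inE eqxx (negbTE kn).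
have bnd : forall x, x \in s -> #|D w x| <= 3 by move=> x xs; exact: (hs x w xs ws).
have vE' : v = mk w [set z in [:: i1]] by rewrite vE flipE.
have Dflip : forall a, D w (flip w a) = [set z in [:: a]] by move=> a; rewrite flipE D_mk.
have Dv : D w v = [set z in [:: i1]] by rewrite vE Dflip.
have findY : forall x a b, x \in s -> D w x = [set z in [:: a; b]] -> a != b ->
    a != i1 -> b != i1 ->
   exists2 y, y \in s & [/\ #|D w y| = 3, a \notin D w y, i1 \in D w y & b \in D w y].
  move=> x a b xs Dx ab a1 b1.
  have [y ys hy] := hx _ (noflip a a1).
  exists y => //.
  have h1 := hdE w y (flip w a).
  rewrite (Dflip a) cardI_seq // card_seq //= in h1.
  have h2 := hdE w y v; rewrite Dv cardI_seq // card_seq //= in h2.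
  have hb1 := hs _ _ ys vs.
  have u2 : uniq [:: a; b] by uq.
  have h3 := hdE w y x; rewrite Dx cardI_seq // card_seq //= in h3.
  have hb2 := hs _ _ ys xs; have hb3 := bnd _ ys.
  suff: [&& #|D w y| == 3, a \notin D w y, i1 \in D w y & b \in D w y].
    by case/and4P => /eqP.
  move: hy h1 h2 h3 hb1 hb2 hb3.
  move: (hdist y (flip w a)) (hdist y v) (hdist y x) #|D w y| => d1 d2 d3 m.
  case: (a \in D w y); case: (i1 \in D w y); case: (b \in D w y) => /= q1 q2 q3 q4 q5 q6 q7;
   clear -q1 q2 q3 q4 q5 q6 q7; lia.
have keyX : forall x, x \in s -> i1 \notin D w x -> #|D w x| = 2 -> False.
  move=> x xs x1 /eqP /cards2P [a [b [ab Dx]]].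
  have a1 : a != i1 by apply/eqP => E; move: x1; rewrite Dx -E !inE eqxx.
  have b1 : b != i1 by apply/eqP => E; move: x1; rewrite Dx -E !inE eqxx orbT.
  have Dx' : D w x = [set z in [:: a; b]] by rewrite Dx; apply/setP=> z; rewrite !inE.
  have Dx'' : D w x = [set z in [:: b; a]] by rewrite Dx; apply/setP=> z; rewrite !inE orbC.
  have [y ys [y3 ay y1 yb]] := findY x a b xs Dx' ab a1 b1.
  have [z zs [z3 bz z1 za]] := findY x b a xs Dx'' (negbT (introF eqP (fun E => (negP ab) (introT eqP (esym E))))) b1 a1.
  have hyz := hdE w y z; have hyz' := hs _ _ ys zs.
  have : ~~ (D w y :&: D w z \subset [set i1]).
    apply/negP => /subset_leq_card; rewrite cards1 => q.
    move: hyz hyz' q; rewrite y3 z3.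
    move: (hdist y z) #|D w y :&: D w z| => d1 m q1 q2 q3; clear -q1 q2 q3; lia.
  case/subsetPn => c; rewrite in_setI => /andP[cy cz]; rewrite in_set1 => c1.
  have ca : c != a by apply/eqP => E; move: ay; rewrite -E cy.
  have cb : c != b by apply/eqP => E; move: bz; rewrite -E cz.
  have hY : D w y = [set t in [:: i1; b; c]].
    apply/esym/eqP; rewrite eqEcard card_seq; last by uq.
    rewrite y3 leqnn andbT; apply/subsetP => t; rewrite in_set !in_cons in_nil orbF.
    by case/or3P => /eqP ->.
  have hZ : D w z = [set t in [:: i1; a; c]].
    apply/esym/eqP; rewrite eqEcard card_seq; last by uq.
    rewrite z3 leqnn andbT; apply/subsetP => t; rewrite in_set !in_cons in_nil orbF.
    by case/or3P => /eqP ->.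
  have : 0 < #|~: [set t in [:: i1; a; b; c]]|.
    have := cardsC [set t in [:: i1; a; b; c]]; rewrite card_ord cardsE.
    have := card_size [:: i1; a; b; c]; simpl size.
    move: #|[:: i1; a; b; c]| #|~: [set t in [:: i1; a; b; c]]| => m1 m2 q1 q2.
    clear -q1 q2 hn; lia.
  case/card_gt0P => k; rewrite !inE !negb_or => /and4P [k1 ka kb kc].
  have [u us uk] : exists2 u, u \in s & k \in D w u.
    move/forallP/(_ k)/andP: hc => [/exists_inP[u1 u1s u1k] /exists_inP[u2 u2s u2k]].
    case Ew: (w k); [exists u2 | exists u1] => //; rewrite inE Ew.
      by case: (u2 k) u2k.
    by case: (u1 k) u1k.
  have U1 : #|D w u| != 1.
    apply/negP => /cards1P [e De].
    have ek : e = k by move: uk; rewrite De inE => /eqP.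
    have : u = flip w k.
      by rewrite flipE -(mk_D w u) De ek; congr mk; apply/setP=> t; rewrite !inE.
    by move=> E; move: us; rewrite E (negbTE (noflip k k1)).
  have h1 := hdE w u v; rewrite Dv cardI_seq // card_seq //= in h1.
  have u2 : uniq [:: a; b] by uq.
  have uy : uniq [:: i1; b; c] by uq.
  have uz : uniq [:: i1; a; c] by uq.
  have h2 := hdE w u x; rewrite Dx' cardI_seq // card_seq //= in h2.
  have h3 := hdE w u y; rewrite hY cardI_seq // card_seq //= in h3.
  have h4 := hdE w u z; rewrite hZ cardI_seq // card_seq //= in h4.
  have g1 := hs _ _ us vs; have g2 := hs _ _ us xs; have g3 := hs _ _ us ys.
  have g4 := hs _ _ us zs; have g5 := bnd _ us.
  have g6 := count_le (D w u) (s := [:: k; i1; a; b; c]).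
  rewrite /= uk in g6.
  have g7 : uniq [:: k; i1; a; b; c] by uq.
  move: (g6 g7) h1 h2 h3 h4 g1 g2 g3 g4 g5 U1.
  move: (hdist u v) (hdist u x) (hdist u y) (hdist u z) #|D w u| => d1 d2 d3 d4 m.
  case: (i1 \in D w u); case: (a \in D w u); case: (b \in D w u); case: (c \in D w u) => /= q1 q2 q3 q4 q5 q6 q7 q8 q9 q10 q11;
   clear -q1 q2 q3 q4 q5 q6 q7 q8 q9 q10 q11; lia.
apply/subsetP => t /imsetP [j _ ->].
case: (eqVneq j i1) => [->|ji]; first by rewrite vE flipflip.
apply/negPn/negP => fs.
have [x xs hxf] := hx _ fs.
have Dj : D w (flip v j) = [set z in [:: i1; j]] by rewrite vE flip2E // D_mk.
have uj : uniq [:: i1; j] by uq.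
have h1 := hdE w x (flip v j); rewrite Dj cardI_seq // card_seq //= in h1.
have h2 := hdE w x v; rewrite Dv cardI_seq // card_seq //= in h2.
have g1 := hs _ _ xs vs; have g2 := bnd _ xs.
suff: (i1 \notin D w x) && (#|D w x| == 2) by case/andP => ? /eqP; apply: keyX.
move: hxf h1 h2 g1 g2.
move: (hdist x (flip v j)) (hdist x v) #|D w x| => d1 d2 m.
case: (i1 \in D w x); case: (j \in D w x) => /= q1 q2 q3 q4 q5; clear -q1 q2 q3 q4 q5; lia.
Qed.
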